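(* Let $p\in k^\times$, $A_p=k\langle x_1,x_2\rangle/(x_2x_1-px_1x_2)$, and $K$ a Hopf algebra with antipode $S$ such that $A_p$ is a right $K$-comodule algebra via $\rho(x_i)=x_1\otimes y_{1i}+x_2\otimes y_{2i}$. If $S^2=\mathrm{Id}_K$, then $$y_{21}y_{11}=p^{-1}y_{11}y_{21},\quad y_{22}y_{12}=p^{-1}y_{12}y_{22},\quad py_{21}y_{12}=p^{-1}y_{12}y_{21},\quad y_{22}y_{11}=y_{11}y_{22}.$$
   Context: Here $S$ is bijective since $S^2=\mathrm{Id}$. The homological codeterminant ${\sf D}$ of the coaction is the grouplike element with $\rho^!(x_1^*x_2^* )={\sf D}\otimes x_1^*x_2^*$, where $\rho^!(x_i^* )=\sum_s y_{is}\otimes x_s^*$ is the induced left coaction on the Ext-algebra $E=k\langle x_1^*,x_2^*\rangle/(x_2^*x_1^*+p^{-1}x_1^*x_2^*,(x_1^* )^2,(x_2^* )^2)$. *)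

(* Defs.v *)
From HB Require Import structures.
From mathcomp Require Import all_boot all_order all_algebra.
Set Implicit Arguments.
Unset Strict Implicit.
Unset Printing Implicit Defensive.
Import GRing.Theory.
Local Open Scope ring_scope.

Definition i1 : 'I_2 := ord0.
Definition i2 : 'I_2 := ord_max.

Section HopfDefs.
Variables (k : fieldType) (K : algType k).

(* ---------- tensor products K (x) K and K (x) K (x) K ----------
   An element of K (x) K is represented by a formal sum  sum_i a_i (x) b_i,
   i.e. a list of pairs.  Two formal sums denote the same tensor iff every
   bilinear form K x K -> k takes the same value on them (over a field,
   (V (x) W)^* = Bil(V x W, k) separates points). *)

Definition bilinear_form (f : K -> K -> k) : Prop :=
  (forall (a : k) x x' z, f (a *: x + x') z = a * f x z + f x' z) /\
  (forall (a : k) x z z', f x (a *: z + z') = a * f x z + f x z').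

Definition trilinear_form (f : K -> K -> K -> k) : Prop :=
  (forall (a : k) x x' z w, f (a *: x + x') z w = a * f x z w + f x' z w) /\
  (forall (a : k) x z z' w, f x (a *: z + z') w = a * f x z w + f x z' w) /\
  (forall (a : k) x z w w', f x z (a *: w + w') = a * f x z w + f x z w').

Definition teq2 (s t : seq (K * K)) : Prop :=
  forall f, bilinear_form f ->
    \sum_(u <- s) f u.1 u.2 = \sum_(u <- t) f u.1 u.2.

Definition teq3 (s t : seq (K * K * K)) : Prop :=
  forall f, trilinear_form f ->
    \sum_(u <- s) f u.1.1 u.1.2 u.2 = \sum_(u <- t) f u.1.1 u.1.2 u.2.

(* ---------- Hopf algebra structure on the k-algebra K ----------
   Delta x is a (representative of) the coproduct of x in K (x) K. *)
Definition is_hopf_algebra (Delta : K -> seq (K * K)) (eps : K -> k)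
    (S : K -> K) : Prop :=
  (forall (a : k) x z, teq2 (Delta (a *: x + z))
        ([seq (a *: u.1, u.2) | u <- Delta x] ++ Delta z)) /\
  teq2 (Delta 1) [:: (1, 1)] /\
  (forall x z, teq2 (Delta (x * z))
        [seq (u.1 * v.1, u.2 * v.2) | u <- Delta x, v <- Delta z]) /\
  (forall (a : k) x z, eps (a *: x + z) = a * eps x + eps z) /\
  eps 1 = 1 /\
  (forall x z, eps (x * z) = eps x * eps z) /\
  (forall x, teq3 [seq (v.1, v.2, u.2) | u <- Delta x, v <- Delta u.1]
                  [seq (u.1, v.1, v.2) | u <- Delta x, v <- Delta u.2]) /\
  (forall x, \sum_(u <- Delta x) eps u.1 *: u.2 = x) /\
  (forall x, \sum_(u <- Delta x) eps u.2 *: u.1 = x) /\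
  (forall (a : k) x z, S (a *: x + z) = a *: S x + S z) /\
  (forall x, \sum_(u <- Delta x) S u.1 * u.2 = (eps x)%:A) /\
  (forall x, \sum_(u <- Delta x) u.1 * S u.2 = (eps x)%:A).

(* ---------- the free algebra k<x1,x2> (x) K = K<x1,x2> ----------
   Noncommutative polynomials in x1, x2 with coefficients in K, as formal
   sums of (word, coefficient); words are sequences of indices in 'I_2. *)
Definition ncpoly := seq (seq 'I_2 * K).
Definition ncmul (f g : ncpoly) : ncpoly :=
  [seq (u.1 ++ v.1, u.2 * v.2) | u <- f, v <- g].
Definition ncscale (c : K) (f : ncpoly) : ncpoly := [seq (u.1, c * u.2) | u <- f].
Definition nccoef (f : ncpoly) (w : seq 'I_2) : K := \sum_(u <- f | u.1 == w) u.2.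
Definition ncgen (i : 'I_2) : ncpoly := [:: ([:: i], 1)].

Definition Ap_rel (p : k) : ncpoly :=
  ncmul (ncgen i2) (ncgen i1) ++ ncscale (- p%:A) (ncmul (ncgen i1) (ncgen i2)).

(* f lies in the two-sided ideal of K<x1,x2> generated by x2x1 - p x1x2,
   i.e. f = 0 in A_p (x) K = K<x1,x2>/(x2x1 - p x1x2). *)
Definition in_Ap_ideal (p : k) (f : ncpoly) : Prop :=
  exists s : seq (ncpoly * ncpoly), forall w,
    nccoef f w = nccoef (flatten [seq ncmul (ncmul t.1 (Ap_rel p)) t.2 | t <- s]) w.

Definition rho_gen (y : 'I_2 -> 'I_2 -> K) (i : 'I_2) : ncpoly :=
  [:: ([:: i1], y i1 i); ([:: i2], y i2 i)].

(* A_p is a right K-comodule algebra via rho: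
   - rho extends to an algebra map A_p -> A_p (x) K, i.e. the images of the
     generators satisfy the defining relation in A_p (x) K;
   - coassociativity and counitality (checked on the generators x1, x2, which
     suffices since all maps involved are algebra maps; as x1, x2 are linearly
     independent in A_p they read Delta(y_ij) = sum_l y_il (x) y_lj and
     eps(y_ij) = delta_ij). *)
Definition is_Ap_comodule_algebra (p : k) (Delta : K -> seq (K * K))
    (eps : K -> k) (y : 'I_2 -> 'I_2 -> K) : Prop :=
  in_Ap_ideal p (ncmul (rho_gen y i2) (rho_gen y i1)
                 ++ ncscale (- p%:A) (ncmul (rho_gen y i1) (rho_gen y i2))) /\
  (forall i j, teq2 (Delta (y i j)) [seq (y i l, y l j) | l : 'I_2]) /\
  (forall i j, eps (y i j) = (i == j)%:R).

End HopfDefs.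

(* Main.v *)
Require Import Defs.
From HB Require Import structures.
From mathcomp Require Import all_boot all_order all_algebra.
From mathcomp.algebra_tactics Require Import ring.
From mathcomp Require boolp classical_sets.
Import GRing.Theory.
Local Open Scope ring_scope.

Module SepM.
Import boolp classical_sets.
Local Open Scope classical_set_scope.
Lemma sep_lin (k : fieldType) (V : lmodType k) (v : V) : v != 0 ->
  exists lam : V -> k, (forall a x y, lam (a *: x + y) = a * lam x + lam y)
     /\ lam v = 1.
Proof.
move=> v0.
pose P := [set W : set V | (forall a x y, W x -> W y -> W (a *: x + y)) /\ ~ W v].
have [A [[Acl Av] Amax]] : exists A, P A /\ forall B, A `<` B -> ~ P B.
  apply: Zorn_bigcup => F FP Ftot; split.
    move=> a x y [W1 FW1 W1x] [W2 FW2 W2y].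
    have [W12|W21] := Ftot _ _ FW1 FW2.
      exists W2 => //; apply: (FP _ FW2).1 => //; exact: W12.
    exists W1 => //; apply: (FP _ FW1).1 => //; exact: W21.
  by move=> [W FW Wv]; apply: (FP _ FW).2.
have A0 : A 0.
  apply: contrapT => nA0.
  have [[x Ax]|A_empty] := pselect (exists x, A x).
    by apply: nA0; have := Acl (-1) x x Ax Ax; rewrite scaleN1r addNr.
  apply: (Amax [set 0]); split.
  - by move=> x Ax; exfalso; apply: A_empty; exists x.
  - by move=> /(_ 0 erefl).
  - by move=> a x y -> ->; rewrite scaler0 addr0.
  - by move=> /= v0'; move: v0; rewrite -v0' eqxx.
have dec x : exists t : k, A (x - t *: v).
  have [Ax|nAx] := pselect (A x); first by exists 0; rewrite scale0r subr0.
  pose B := [set z | exists w s, A w /\ z = w + s *: x].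
  have AB : A `<` B.
    split; first by move=> w Aw; exists w, 0; rewrite scale0r addr0.
    by move=> BA; apply: nAx; apply: BA; exists 0, 1; rewrite scale1r add0r.
  have [vB|nvB] := pselect (B v); last first.
    exfalso; apply: (Amax B AB); split => //.
    move=> a _ _ [w1 [s1 [Aw1 ->]]] [w2 [s2 [Aw2 ->]]].
    exists (a *: w1 + w2), (a * s1 + s2); split; first exact: Acl.
    by rewrite scalerDr scalerA scalerDl addrACA.
  move: vB => [w [s [Aw vE]]].
  have s0 : s != 0.
    by apply/eqP => s0; apply: Av; rewrite vE s0 scale0r addr0.
  exists s^-1.
  have -> : x - s^-1 *: v = (- s^-1) *: w + 0.
    rewrite vE addr0 scalerDr scalerA mulVf // scale1r scaleNr opprD addrA.
    by rewrite addrAC subrr add0r.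
  exact: Acl.
have uniq t t' x : A (x - t *: v) -> A (x - t' *: v) -> t = t'.
  move=> h h'; apply/eqP; rewrite -subr_eq0; apply/negP => /negP nz.
  apply: Av.
  have := Acl (-1) _ _ h h'.
  rewrite scaleN1r opprB addrA subrK -scalerBl => h2.
  have := Acl (t - t')^-1 _ _ h2 A0.
  by rewrite addr0 scalerA mulVf // scale1r.
exists (fun x => projT1 (cid (dec x))); split.
  move=> a x y.
  apply: (uniq _ _ (a *: x + y) (projT2 (cid (dec (a *: x + y))))).
  have := Acl a _ _ (projT2 (cid (dec x))) (projT2 (cid (dec y))).
  by rewrite scalerDl -scalerA scalerBr addrACA opprD.
apply: (uniq _ _ v (projT2 (cid (dec v)))).
by rewrite scale1r subrr.
Qed.
End SepM.

Definition linf {k : fieldType} {V : lmodType k} (lam : V -> k) :=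
  forall a x y, lam (a *: x + y) = a * lam x + lam y.

Lemma linf0 {k : fieldType} {V : lmodType k} {lam : V -> k} : linf lam -> lam 0 = 0.
Proof.
move=> hl; have := hl 1 0 0; rewrite scale1r addr0 mul1r => h.
by apply: (@addrI _ (lam 0)); rewrite addr0 -h.
Qed.

Lemma linfD {k : fieldType} {V : lmodType k} {lam : V -> k} : linf lam ->
  forall x y, lam (x + y) = lam x + lam y.
Proof. by move=> hl x y; rewrite -[x]scale1r hl mul1r scale1r. Qed.

Lemma linfZ {k : fieldType} {V : lmodType k} {lam : V -> k} : linf lam ->
  forall a x, lam (a *: x) = a * lam x.
Proof. by move=> hl a x; rewrite -[a *: x]addr0 hl linf0 // addr0. Qed.

Lemma linfN {k : fieldType} {V : lmodType k} {lam : V -> k} : linf lam ->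
  forall x, lam (- x) = - lam x.
Proof. by move=> hl x; rewrite -scaleN1r linfZ // mulN1r. Qed.

Lemma linfB {k : fieldType} {V : lmodType k} {lam : V -> k} : linf lam ->
  forall x y, lam (x - y) = lam x - lam y.
Proof.
move=> hl x y; rewrite linfD // -scaleN1r linfZ //; ring.
Qed.

Lemma linf_sum {k : fieldType} {V : lmodType k} {lam : V -> k} (I : Type)
  (s : seq I) (F : I -> V) : linf lam ->
  lam (\sum_(i <- s) F i) = \sum_(i <- s) lam (F i).
Proof.
move=> hl; elim: s => [|i s IH]; first by rewrite !big_nil linf0.
by rewrite !big_cons linfD // IH.
Qed.

Lemma sep_eq (k : fieldType) (V : lmodType k) (x y : V) :
  (forall lam, linf lam -> lam x = lam y) -> x = y.
Proof.
move=> h; apply/eqP; rewrite -subr_eq0; apply/negP => /negP nz.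
have [lam [hl h1]] := @SepM.sep_lin k V _ nz.
have := h lam hl; move/eqP; rewrite -subr_eq0 -linfB // h1.
by rewrite oner_eq0.
Qed.
Lemma sum_I2 (V : nmodType) (T : Type) (h : 'I_2 -> T) (g : T -> V) :
  \sum_(u <- [seq h l | l : 'I_2]) g u = g (h i1) + g (h i2).
Proof.
rewrite big_map big_enum /= big_ord_recl big_ord1 /=.
by have -> : lift ord0 ord0 = i2 :> 'I_2 by apply: val_inj.
Qed.
Lemma I2_cases (i : 'I_2) : i = i1 \/ i = i2.
Proof. by case: i => [[|[|n]] Hi] //; [left|right]; apply: val_inj. Qed.

Lemma sum_allpairs (V : nmodType) (T1 T2 T : Type) (s1 : seq T1) (s2 : seq T2)
  (f : T1 -> T2 -> T) (F : T -> V) :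
  \sum_(w <- [seq f u v | u <- s1, v <- s2]) F w = \sum_(u <- s1) \sum_(v <- s2) F (f u v).
Proof. exact: big_allpairs_dep. Qed.

Lemma teq2_lift {k : fieldType} {K : algType k} {s t : seq (K * K)} :
  teq2 s t -> forall g : K -> K -> K,
  (forall (a : k) x x' z, g (a *: x + x') z = a *: g x z + g x' z) ->
  (forall (a : k) x z z', g x (a *: z + z') = a *: g x z + g x z') ->
  \sum_(u <- s) g u.1 u.2 = \sum_(u <- t) g u.1 u.2.
Proof.
move=> h g gl gr; apply: sep_eq => lam hl.
rewrite !linf_sum //; apply: (h (fun x z => lam (g x z))); split.
  by move=> a x x' z; rewrite gl hl.
by move=> a x z z'; rewrite gr hl.
Qed.

Lemma teq2_prod {k : fieldType} {K : algType k} {s1 t1 s2 t2 : seq (K * K)} :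
  teq2 s1 t1 -> teq2 s2 t2 ->
  teq2 [seq (u.1 * v.1, u.2 * v.2) | u <- s1, v <- s2]
       [seq (u.1 * v.1, u.2 * v.2) | u <- t1, v <- t2].
Proof.
move=> h1 h2 f [fl fr]; rewrite !big_allpairs_dep /=.
transitivity (\sum_(u <- s1) \sum_(v <- t2) f (u.1 * v.1) (u.2 * v.2)).
  apply: eq_bigr => u _.
  apply: (h2 (fun x z => f (u.1 * x) (u.2 * z))); split.
    by move=> a x x' z; rewrite mulrDr -scalerAr fl.
  by move=> a x z z'; rewrite mulrDr -scalerAr fr.
rewrite exchange_big [in RHS]exchange_big /=; apply: eq_bigr => v _.
apply: (h1 (fun x z => f (x * v.1) (z * v.2))); split.
  by move=> a x x' z; rewrite mulrDl -scalerAl fl.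
by move=> a x z z'; rewrite mulrDl -scalerAl fr.
Qed.

Lemma nccoef_cat (k : fieldType) (K : algType k) (f g : ncpoly K) w :
  nccoef (f ++ g) w = nccoef f w + nccoef g w.
Proof. by rewrite /nccoef big_cat. Qed.

Lemma nccoef_sandwich (k : fieldType) (K : algType k) (t1 R t2 : ncpoly K) w :
  size w = 2%N -> all (fun r => size r.1 == 2%N) R ->
  nccoef (ncmul (ncmul t1 R) t2) w
   = nccoef t1 [::] * nccoef R w * nccoef t2 [::].
Proof.
move=> sw /allP sR; rewrite /nccoef /ncmul big_mkcond big_allpairs_dep /=.
rewrite big_allpairs_dep /=.
transitivity (\sum_(u <- t1) \sum_(r <- R) \sum_(v <- t2)
   ((if u.1 == [::] then u.2 else 0) * (if r.1 == w then r.2 else 0)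
     * (if v.1 == [::] then v.2 else 0))).
  apply: eq_bigr => u _; rewrite big_seq [in RHS]big_seq; apply: eq_bigr => r rR.
  apply: eq_bigr => v _.
  have /eqP sr := sR r rR.
  case: u => [[|x u1] u2] /=; case: v => [[|x' v1] v2] /=.
  - by rewrite cats0; case: (r.1 == w); rewrite ?mulr0 ?mul0r.
  - case: eqP => [E|]; last by rewrite mulr0.
    by move: (congr1 size E) => /=; rewrite size_cat sr sw addnS => /eqP.
  - case: eqP => [E|]; last by rewrite !mul0r.
    by move: (congr1 size E) => /=; rewrite !size_cat sr sw addn0 addn2 => /eqP.
  - case: eqP => [E|]; last by rewrite !mul0r.
    by move: (congr1 size E) => /=; rewrite !size_cat sr sw addn2 => /eqP.
rewrite [X in X * _ * _]big_mkcond [X in _ * X * _]big_mkcond [X in _ * X]big_mkcond /=.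
rewrite big_distrl /= big_distrl /=; apply: eq_bigr => u _.
rewrite [X in X * _]big_distrr big_distrl /=; apply: eq_bigr => r _.
by rewrite big_distrr.
Qed.

Lemma nccoef_ideal (k : fieldType) (K : algType k) (p : k) (s : seq (ncpoly K * ncpoly K)) w :
  size w = 2%N ->
  nccoef (flatten [seq ncmul (ncmul t.1 (Ap_rel K p)) t.2 | t <- s]) w
  = \sum_(t <- s) nccoef t.1 [::] * nccoef (Ap_rel K p) w * nccoef t.2 [::].
Proof.
move=> sw; elim: s => [|t s IH]; first by rewrite big_nil /nccoef big_nil.
by rewrite /= nccoef_cat IH big_cons nccoef_sandwich.
Qed.

Lemma Ap_relations (k : fieldType) (K : algType k) (p : k) (y : 'I_2 -> 'I_2 -> K) :
  p != 0 ->
  in_Ap_ideal p (ncmul (rho_gen y i2) (rho_gen y i1)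
                 ++ ncscale (- p%:A) (ncmul (rho_gen y i1) (rho_gen y i2))) ->
  [/\ y i1 i2 * y i1 i1 = p *: (y i1 i1 * y i1 i2),
      y i2 i2 * y i2 i1 = p *: (y i2 i1 * y i2 i2) &
      y i2 i2 * y i1 i1 = y i1 i1 * y i2 i2 - p^-1 *: (y i1 i2 * y i2 i1)
                          + p *: (y i2 i1 * y i1 i2)].
Proof.
move=> p0; set F := (X in in_Ap_ideal _ X); case=> s hs.
have r11 : nccoef (Ap_rel K p) [:: i1; i1] = 0.
  by rewrite /nccoef /= !big_cons big_nil.
have r22 : nccoef (Ap_rel K p) [:: i2; i2] = 0.
  by rewrite /nccoef /= !big_cons big_nil.
have r21 : nccoef (Ap_rel K p) [:: i2; i1] = 1.
  by rewrite /nccoef /= !big_cons big_nil /= ?mulr1 ?addr0 ?add0r.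
have r12 : nccoef (Ap_rel K p) [:: i1; i2] = - p%:A.
  by rewrite /nccoef /= !big_cons big_nil /= ?mulr1 ?addr0 ?add0r.
have f11 : nccoef F [:: i1; i1] = y i1 i2 * y i1 i1 - p *: (y i1 i1 * y i1 i2).
  by rewrite /nccoef /= !big_cons big_nil /= ?addr0 ?add0r mulNr mulr_algl.
have f22 : nccoef F [:: i2; i2] = y i2 i2 * y i2 i1 - p *: (y i2 i1 * y i2 i2).
  by rewrite /nccoef /= !big_cons big_nil /= ?addr0 ?add0r mulNr mulr_algl.
have f12 : nccoef F [:: i1; i2] = y i1 i2 * y i2 i1 - p *: (y i1 i1 * y i2 i2).
  by rewrite /nccoef /= !big_cons big_nil /= ?addr0 ?add0r mulNr mulr_algl.
have f21 : nccoef F [:: i2; i1] = y i2 i2 * y i1 i1 - p *: (y i2 i1 * y i1 i2).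
  by rewrite /nccoef /= !big_cons big_nil /= ?addr0 ?add0r mulNr mulr_algl.
have e11 := hs [:: i1; i1]; have e22 := hs [:: i2; i2].
have e12 := hs [:: i1; i2]; have e21 := hs [:: i2; i1].
rewrite nccoef_ideal // in e11; rewrite nccoef_ideal // in e22.
rewrite nccoef_ideal // in e12; rewrite nccoef_ideal // in e21.
rewrite r11 big1 in e11; last by move=> t _; rewrite mulr0 mul0r.
rewrite r22 big1 in e22; last by move=> t _; rewrite mulr0 mul0r.
rewrite f11 in e11; rewrite f22 in e22; rewrite r12 in e12; rewrite r21 in e21.
have emix : p *: nccoef F [:: i2; i1] + nccoef F [:: i1; i2] = 0.
  rewrite e21 e12 scaler_sumr -big_split big1 // => t _ /=.
  by rewrite mulr1 mulrN mulNr mulr_algr -scalerAl subrr.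
rewrite f21 f12 in emix.
split.
- by apply/eqP; rewrite -subr_eq0 e11.
- by apply/eqP; rewrite -subr_eq0 e22.
apply: (scalerI p0); apply/eqP; rewrite -subr_eq0; apply/eqP.
rewrite -emix; apply: sep_eq => lam hl.
rewrite !(linfD hl, linfN hl, linfZ hl); field; by [].
Qed.


Lemma assoc2 (R : pzRingType) (z1 z2 a b c d X W : R) :
  (z1 * a + z2 * c) * X + (z1 * b + z2 * d) * W
  = z1 * (a * X + b * W) + z2 * (c * X + d * W).
Proof. by rewrite !mulrDl !mulrDr !mulrA addrACA. Qed.

Lemma inv_unique (k : fieldType) (K : algType k) (L U R : 'I_2 -> 'I_2 -> K) :
  (forall i j, L i i1 * U i1 j + L i i2 * U i2 j = ((i == j)%:R)%:A) ->
  (forall i j, U i i1 * R i1 j + U i i2 * R i2 j = ((i == j)%:R)%:A) ->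
  forall i j, L i j = R i j.
Proof.
move=> LU UR i j.
have := @assoc2 _ (L i i1) (L i i2) (U i1 i1) (U i1 i2) (U i2 i1) (U i2 i2) (R i1 j) (R i2 j).
rewrite !UR !LU.
by case: (I2_cases i) => ->; case: (I2_cases j) => -> /=;
  rewrite ?mulr1n ?mulr0n ?scale1r ?scale0r ?mulr1 ?mulr0 ?mul1r ?mul0r ?addr0 ?add0r.
Qed.

Lemma lin_solve (k : fieldType) (V : lmodType k) (x y u v : V) (c : k) :
  (forall lam, linf lam -> lam x - lam y = c * (lam u - lam v)) -> u = v -> x = y.
Proof.
move=> h uv; apply: sep_eq => lam hl; apply/eqP; rewrite -subr_eq0 (h lam hl) uv.
by rewrite subrr mulr0.
Qed.

Lemma bilD1 {k : fieldType} {K : algType k} {f : K -> K -> k} : bilinear_form f ->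
  forall x x' z, f (x + x') z = f x z + f x' z.
Proof. by move=> [fl _] x x' z; rewrite -[x]scale1r fl mul1r scale1r. Qed.
Lemma bil01 {k : fieldType} {K : algType k} {f : K -> K -> k} : bilinear_form f ->
  forall z, f 0 z = 0.
Proof.
move=> fb z; have := bilD1 fb 0 0 z; rewrite addr0 => h.
by apply: (@addrI _ (f 0 z)); rewrite addr0 -h.
Qed.
Lemma bilZ1 {k : fieldType} {K : algType k} {f : K -> K -> k} : bilinear_form f ->
  forall a x z, f (a *: x) z = a * f x z.
Proof. by move=> fb a x z; rewrite -[a *: x]addr0 fb.1 bil01 // addr0. Qed.
Lemma bilN1 {k : fieldType} {K : algType k} {f : K -> K -> k} : bilinear_form f ->
  forall x z, f (- x) z = - f x z.
Proof. by move=> fb x z; rewrite -scaleN1r bilZ1 // mulN1r. Qed.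
Lemma bilD2 {k : fieldType} {K : algType k} {f : K -> K -> k} : bilinear_form f ->
  forall x z z', f x (z + z') = f x z + f x z'.
Proof. by move=> [_ fr] x z z'; rewrite -[z]scale1r fr mul1r scale1r. Qed.
Lemma bil02 {k : fieldType} {K : algType k} {f : K -> K -> k} : bilinear_form f ->
  forall x, f x 0 = 0.
Proof.
move=> fb x; have := bilD2 fb x 0 0; rewrite addr0 => h.
by apply: (@addrI _ (f x 0)); rewrite addr0 -h.
Qed.
Lemma bilZ2 {k : fieldType} {K : algType k} {f : K -> K -> k} : bilinear_form f ->
  forall a x z, f x (a *: z) = a * f x z.
Proof. by move=> fb a x z; rewrite -[a *: z]addr0 fb.2 bil02 // addr0. Qed.
Lemma bilN2 {k : fieldType} {K : algType k} {f : K -> K -> k} : bilinear_form f ->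
  forall x z, f x (- z) = - f x z.
Proof. by move=> fb x z; rewrite -scaleN1r bilZ2 // mulN1r. Qed.

Theorem lemma5p3 (k : fieldType) (K : algType k)
    (Delta : K -> seq (K * K)) (eps : K -> k) (S : K -> K)
    (p : k) (y : 'I_2 -> 'I_2 -> K) :
  p != 0 ->
  is_hopf_algebra Delta eps S ->
  is_Ap_comodule_algebra p Delta eps y ->
  (forall x, S (S x) = x) ->
  [/\ y i2 i1 * y i1 i1 = p^-1 *: (y i1 i1 * y i2 i1),
      y i2 i2 * y i1 i2 = p^-1 *: (y i1 i2 * y i2 i2),
      p *: (y i2 i1 * y i1 i2) = p^-1 *: (y i1 i2 * y i2 i1)
    & y i2 i2 * y i1 i1 = y i1 i1 * y i2 i2].
Proof.
move=> p0 [Dlin [D1 [Dmul [elin [e1 [emul [coass [cu1 [cu2 [Slin [antiL antiR]]]]]]]]]]].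
move=> [rel [Dy ey]] SS.
have [R1 R2 R3] := @Ap_relations k K p y p0 rel.
have S0 : S 0 = 0.
  have := Slin 1 0 0; rewrite !scale1r addr0 => h.
  by apply: (@addrI _ (S 0)); rewrite addr0 -h.
have SZ a x : S (a *: x) = a *: S x by rewrite -[a *: x]addr0 Slin S0 addr0.
have e0 : eps 0 = 0.
  have := elin 1 0 0; rewrite !scale1r addr0 mul1r => h.
  by apply: (@addrI _ (eps 0)); rewrite addr0 -h.
have eZ a x : eps (a *: x) = a * eps x by rewrite -[a *: x]addr0 elin e0 addr0.
have eD x z : eps (x + z) = eps x + eps z by rewrite -[x]scale1r elin mul1r scale1r.
have ZY i j : S (y i i1) * y i1 j + S (y i i2) * y i2 j = ((i == j)%:R)%:A.
  rewrite -(ey i j) -(antiL (y i j)) (teq2_lift (Dy i j) (fun x z => S x * z)) ?sum_I2 //.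
    by move=> a x x' z; rewrite Slin mulrDl -scalerAl.
  by move=> a x z z'; rewrite mulrDr -scalerAr.
have YZ i j : y i i1 * S (y i1 j) + y i i2 * S (y i2 j) = ((i == j)%:R)%:A.
  rewrite -(ey i j) -(antiR (y i j)) (teq2_lift (Dy i j) (fun x z => x * S z)) ?sum_I2 //.
    by move=> a x x' z; rewrite mulrDl -scalerAl.
  by move=> a x z z'; rewrite Slin mulrDr -scalerAr.

pose D := (- p^-1) *: ((y i1 i2) * (y i2 i1)) + (y i1 i1) * (y i2 i2).
have ZY11 : S (y i1 i1) * (y i1 i1) + S (y i1 i2) * (y i2 i1) = 1 by rewrite ZY /= mulr1n scale1r.
have ZY12 : S (y i1 i1) * (y i1 i2) + S (y i1 i2) * (y i2 i2) = 0 by rewrite ZY /= mulr0n scale0r.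
have ZY21 : S (y i2 i1) * (y i1 i1) + S (y i2 i2) * (y i2 i1) = 0 by rewrite ZY /= mulr0n scale0r.
have ZY22 : S (y i2 i1) * (y i1 i2) + S (y i2 i2) * (y i2 i2) = 1 by rewrite ZY /= mulr1n scale1r.
have YM11 : (y i1 i1) * (y i2 i2) + (y i1 i2) * ((- p^-1) *: (y i2 i1)) = D by rewrite /D -scalerAr addrC.
have YM12 : (y i1 i1) * ((- p) *: (y i1 i2)) + (y i1 i2) * (y i1 i1) = 0 by rewrite R1 -scalerAr scaleNr addNr.
have YM21 : (y i2 i1) * (y i2 i2) + (y i2 i2) * ((- p^-1) *: (y i2 i1)) = 0.
  by rewrite -scalerAr R2 scalerA mulNr mulVf // scaleN1r addrN.
have YM22 : (y i2 i1) * ((- p) *: (y i1 i2)) + (y i2 i2) * (y i1 i1) = D.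
  rewrite R3 /D -scalerAr; apply: sep_eq => lam hl.
  by rewrite !(linfD hl, linfN hl, linfZ hl); ring.
have MZ11 : S (y i1 i1) * D = (y i2 i2).
  have := @assoc2 _ (S (y i1 i1)) (S (y i1 i2)) (y i1 i1) (y i1 i2) (y i2 i1) (y i2 i2) (y i2 i2) ((- p^-1) *: (y i2 i1)).
  by rewrite ZY11 ZY12 YM11 YM21 mul1r mul0r addr0 mulr0 addr0.
have MZ21 : S (y i2 i1) * D = (- p^-1) *: (y i2 i1).
  have := @assoc2 _ (S (y i2 i1)) (S (y i2 i2)) (y i1 i1) (y i1 i2) (y i2 i1) (y i2 i2) (y i2 i2) ((- p^-1) *: (y i2 i1)).
  by rewrite ZY21 ZY22 YM11 YM21 mul1r mul0r add0r mulr0 addr0.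
have MZ12 : S (y i1 i2) * D = (- p) *: (y i1 i2).
  have := @assoc2 _ (S (y i1 i1)) (S (y i1 i2)) (y i1 i1) (y i1 i2) (y i2 i1) (y i2 i2) ((- p) *: (y i1 i2)) (y i1 i1).
  by rewrite ZY11 ZY12 YM12 YM22 mul1r mul0r addr0 mulr0 add0r.
have MZ22 : S (y i2 i2) * D = (y i1 i1).
  have := @assoc2 _ (S (y i2 i1)) (S (y i2 i2)) (y i1 i1) (y i1 i2) (y i2 i1) (y i2 i2) ((- p) *: (y i1 i2)) (y i1 i1).
  by rewrite ZY21 ZY22 YM12 YM22 mul1r mul0r add0r mulr0 add0r.

have eDD : eps D = 1.
  by rewrite /D elin !emul !ey /= mulr0n mulr1n mul0r mulr0 mul1r add0r.
have DD : teq2 (Delta D) [:: (D, D)].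
  move=> f fb.
  rewrite /D (Dlin _ _ _ f fb) big_cat big_map /=.
  under eq_bigr do rewrite (bilZ1 fb).
  rewrite -big_distrr /=.
  rewrite (Dmul (y i1 i2) (y i2 i1) f fb) (Dmul (y i1 i1) (y i2 i2) f fb).
  rewrite (teq2_prod (Dy i1 i2) (Dy i2 i1) f fb) (teq2_prod (Dy i1 i1) (Dy i2 i2) f fb).
  rewrite !sum_allpairs (@sum_I2 _ _ (fun l => (y i1 l, y l i2))).
  rewrite !(@sum_I2 _ _ (fun l => (y i2 l, y l i1))) (@sum_I2 _ _ (fun l => (y i1 l, y l i1))).
  rewrite !(@sum_I2 _ _ (fun l => (y i2 l, y l i2))) /= big_cons big_nil addr0.
  rewrite R1 R2 R3.
  rewrite !(bilD1 fb, bilD2 fb, bilZ1 fb, bilZ2 fb, bilN1 fb, bilN2 fb).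
  field; by [].

have ED : S D * D = 1.
  have := antiL D; rewrite (teq2_lift DD (fun x z => S x * z)).
  - by rewrite big_cons big_nil addr0 eDD scale1r.
  - by move=> a x x' z; rewrite Slin mulrDl -scalerAl.
  - by move=> a x z z'; rewrite mulrDr -scalerAr.
have DE : D * S D = 1.
  have := antiR D; rewrite (teq2_lift DD (fun x z => x * S z)).
  - by rewrite big_cons big_nil addr0 eDD scale1r.
  - by move=> a x x' z; rewrite mulrDl -scalerAl.
  - by move=> a x z z'; rewrite Slin mulrDr -scalerAr.
have DeltaE : teq2 (Delta (S D)) [:: (S D, S D)].
  move=> f fb.
  pose g x z := f (S D * x) (S D * z).
  have gb : bilinear_form g.
    split.
      by move=> a x x' z; rewrite /g mulrDr -scalerAr fb.1.
    by move=> a x z z'; rewrite /g mulrDr -scalerAr fb.2.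
  have Eref : teq2 (Delta (S D)) (Delta (S D)) by [].
  have h1 := Dmul D (S D) g gb.
  rewrite (teq2_prod DD Eref g gb) sum_allpairs big_cons big_nil addr0 in h1.
  rewrite DE (D1 g gb) big_cons big_nil addr0 /g /= in h1.
  rewrite big_cons big_nil addr0 /=.
  move: h1; rewrite mulr1 => ->.
  by apply: eq_bigr => v _; rewrite !mulrA ED !mul1r.
have eE : eps (S D) = 1.
  by have := emul D (S D); rewrite DE e1 eDD mul1r => <-.
have DU i j : teq2 (Delta (y i j * S D)) [seq (y i l * S D, y l j * S D) | l : 'I_2].
  move=> f fb; rewrite (Dmul _ _ f fb) (teq2_prod (Dy i j) DeltaE f fb) sum_allpairs.
  rewrite (@sum_I2 _ _ (fun l => (y i l, y l j))) !big_cons !big_nil !addr0.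
  by rewrite (@sum_I2 _ _ (fun l => (y i l * S D, y l j * S D))).
have UR i j : y i i1 * S D * S (y i1 j * S D) + y i i2 * S D * S (y i2 j * S D)
              = ((i == j)%:R)%:A.
  have <- : eps (y i j * S D) = (i == j)%:R by rewrite emul eE mulr1 ey.
  rewrite -(antiR (y i j * S D)) (teq2_lift (DU i j) (fun x z => x * S z)).
  - by rewrite (@sum_I2 _ _ (fun l => (y i l * S D, y l j * S D))).
  - by move=> a x x' z; rewrite mulrDl -scalerAl.
  - by move=> a x z z'; rewrite Slin mulrDr -scalerAr.
have LU i j : (D * S (y i i1)) * (y i1 j * S D) + (D * S (y i i2)) * (y i2 j * S D)
              = ((i == j)%:R)%:A.
  transitivity (D * (S (y i i1) * y i1 j + S (y i i2) * y i2 j) * S D).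
    by rewrite mulrDr mulrDl !mulrA.
  by rewrite ZY mulr_algr -scalerAl DE.
have SU i j : S (y i j * S D) = D * S (y i j).
  symmetry.
  exact: (@inv_unique k K (fun i j => D * S (y i j)) (fun i j => y i j * S D)
            (fun i j => S (y i j * S D)) LU UR i j).

have Sa : S (y i1 i1) = (y i2 i2) * S D by rewrite -MZ11 -mulrA DE mulr1.
have Sb : S (y i1 i2) = ((- p) *: (y i1 i2)) * S D by rewrite -MZ12 -mulrA DE mulr1.
have Sc : S (y i2 i1) = ((- p^-1) *: (y i2 i1)) * S D by rewrite -MZ21 -mulrA DE mulr1.
have Sd : S (y i2 i2) = (y i1 i1) * S D by rewrite -MZ22 -mulrA DE mulr1.
have Ha : (y i1 i1) = D * ((y i1 i1) * S D) by rewrite -{1}(SS (y i1 i1)) Sa SU Sd.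
have Hb : (y i1 i2) = (- p) *: (D * (((- p) *: (y i1 i2)) * S D)).
  by rewrite -{1}(SS (y i1 i2)) Sb -scalerAl SZ SU Sb -scalerAl.
have Hc : (y i2 i1) = (- p^-1) *: (D * (((- p^-1) *: (y i2 i1)) * S D)).
  by rewrite -{1}(SS (y i2 i1)) Sc -scalerAl SZ SU Sc -scalerAl.
have Hd : (y i2 i2) = D * ((y i2 i2) * S D) by rewrite -{1}(SS (y i2 i2)) Sd SU Sa.
have Ea : S D * (y i1 i1) = (y i1 i1) * S D by rewrite {1}Ha mulrA ED mul1r.
have Ed : S D * (y i2 i2) = (y i2 i2) * S D by rewrite {1}Hd mulrA ED mul1r.
have Eb : S D * (y i1 i2) = (p * p) *: ((y i1 i2) * S D).
  rewrite {1}Hb -scalerAr mulrA ED mul1r -?scalerAl scalerA.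
  by congr (_ *: _); exact: mulrNN.
have Ec : S D * (y i2 i1) = (p^-1 * p^-1) *: ((y i2 i1) * S D).
  rewrite {1}Hc -scalerAr [S D * (D * _)]mulrA ED mul1r -?scalerAl scalerA.
  by congr (_ *: _); exact: mulrNN.
have F11 := congr1 (fun x => x * D) ZY11.
have F12 := congr1 (fun x => x * D) ZY12.
have F21 := congr1 (fun x => x * D) ZY21.
rewrite /= Sa Sb -!mulrA Ea Ec mul1r in F11.
rewrite /= Sa Sb -!mulrA Eb Ed mul0r in F12.
rewrite /= Sc Sd -!mulrA Ea Ec mul0r in F21.
rewrite -?scalerAl -?scalerAr -?scalerAl -?scalerAr in F11.
rewrite -?scalerAl -?scalerAr -?scalerAl -?scalerAr in F12.
rewrite -?scalerAl -?scalerAr -?scalerAl -?scalerAr in F21.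
rewrite !mulrDl -?scalerAl -!mulrA ED !mulr1 in F11.
rewrite !mulrDl -?scalerAl -!mulrA ED !mulr1 in F12.
rewrite !mulrDl -?scalerAl -!mulrA ED !mulr1 in F21.
have G4 : (y i2 i2) * (y i1 i1) = (y i1 i1) * (y i2 i2).
  apply: (@lin_solve _ _ _ _ _ _ 1 _ F11) => lam hl.
  rewrite /D !(linfD hl, linfN hl, linfZ hl); field; by [].
have G2 : (y i2 i2) * (y i1 i2) = p^-1 *: ((y i1 i2) * (y i2 i2)).
  apply: (@lin_solve _ _ _ _ _ _ (p^-1 * p^-1) _ F12) => lam hl.
  rewrite !(linfD hl, linfN hl, linfZ hl, linf0 hl); field; by [].
have G1 : (y i2 i1) * (y i1 i1) = p^-1 *: ((y i1 i1) * (y i2 i1)).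
  apply: (@lin_solve _ _ _ _ _ _ (- p) _ F21) => lam hl.
  rewrite !(linfD hl, linfN hl, linfZ hl, linf0 hl); field; by [].
rewrite G4 in R3.
split => //.
apply: (@lin_solve _ _ _ _ _ _ (-1) _ R3) => lam hl.
rewrite !(linfD hl, linfN hl, linfZ hl); field; by [].
Qed.
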